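(* Let $\mathcal{A}$, $\mathcal{B}$ be ordered groups and $\mathcal{M}=\mathcal{A}\times\mathcal{B}$. Let $x_{12},x_{13},x_{14},x_{23},x_{24},x_{34}$ be independent symbols, let $\mathfrak{G}$ be the free abelian group on these six symbols, let $F$ be the field of fractions of the group algebra $\mathbb{Q}\mathfrak{G}$, and let $L=F\mathcal{M}$ be the group algebra of $\mathcal{M}$ over $F$. Let $$X=\begin{pmatrix}1&x_{12}&x_{13}&x_{14}\\0&1&x_{23}&x_{24}\\0&0&1&x_{34}\\0&0&0&1\end{pmatrix}$$ viewed as a matrix over $L$ (each $x_{ij}$ identified with $x_{ij}\cdot e$, $e$ the identity of $\mathcal{M}$). Let $a\in L$ with $a\neq 0$ and $a\neq 1$, and let $A=\mathrm{diag}(1,a,1,a)$, where $1$ is the unit of $L$. Then every entry $b_{ik}$ with $i\le k$ of the matrix $B=X^{-1}AX$ is non-zero.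
   Context: An ordered group is a group with a total order $>$ (exactly one of $x>y$, $y>x$, $x=y$; transitive) satisfying $x>y \Rightarrow axb>ayb$ for all $a,b$. The group algebra $K H$ of a group $H$ over a field $K$ consists of formal finite $K$-linear combinations of elements of $H$ with the usual operations. *)

(* Defs.v *)
From HB Require Import structures.
From mathcomp Require Import all_boot all_order all_algebra.
From mathcomp Require Import finmap.
From mathcomp.multinomials Require Import xfinmap monalg.

Set Implicit Arguments.
Unset Strict Implicit.
Unset Printing Implicit Defensive.

Import GRing.Theory.
Local Open Scope fset.
Local Open Scope fmap.
Local Open Scope ring_scope.

HB.mixin Record Choice_isGrp V of Choice V := {
  gone : V;
  gmul : V -> V -> V;
  ginv : V -> V;
  gmulA : associative gmul;
  gmul1g : left_id gone gmul;
  gmulg1 : right_id gone gmul;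
  gmulVg : left_inverse gone ginv gmul;
  gmulgV : right_inverse gone ginv gmul
}.

#[short(type="grpType")]
HB.structure Definition Grp := { V of Choice V & Choice_isGrp V }.

Section ProdGrp.
Variables (A B : grpType).
Definition pgmul (x y : A * B) : A * B := (gmul x.1 y.1, gmul x.2 y.2).
Definition pgone : A * B := (gone, gone).
Definition pginv (x : A * B) : A * B := (ginv x.1, ginv x.2).
Lemma pgmulA : associative pgmul.
Proof. by move=> x y z; rewrite /pgmul /= !gmulA. Qed.
Lemma pgmul1g : left_id pgone pgmul.
Proof. by case=> x y; rewrite /pgmul /= !gmul1g. Qed.
Lemma pgmulg1 : right_id pgone pgmul.
Proof. by case=> x y; rewrite /pgmul /= !gmulg1. Qed.
Lemma pgmulVg : left_inverse pgone pginv pgmul.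
Proof. by case=> x y; rewrite /pgmul /= !gmulVg. Qed.
Lemma pgmulgV : right_inverse pgone pginv pgmul.
Proof. by case=> x y; rewrite /pgmul /= !gmulgV. Qed.
HB.instance Definition _ := Choice_isGrp.Build (A * B)%type
  pgmulA pgmul1g pgmulg1 pgmulVg pgmulgV.
End ProdGrp.

Definition ordered_group (G : grpType) (gt : G -> G -> Prop) : Prop :=
  [/\ (forall x y : G, gt x y \/ gt y x \/ x = y),
      (forall x y : G, gt x y -> ~ gt y x),
      (forall x : G, ~ gt x x),
      (forall x y z : G, gt x y -> gt y z -> gt x z) &
      (forall a b x y : G, gt x y -> gt (gmul (gmul a x) b) (gmul (gmul a y) b))].

Definition galg (K : grpType) (R : ringType) := {malg R[K]}.

HB.instance Definition _ (K : grpType) (R : ringType) :=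
  GRing.Lmodule.on (galg K R).

Section GAlgRing.
Context (K : grpType) (R : ringType).
Implicit Types (g : galg K R) (k l : K).

Definition gfone : galg K R := << gone >>.

Local Notation "g1 *M_[ k1 , k2 ] g2" :=
  (<< (mcoeff k1 g1) * (mcoeff k2 g2) *g (gmul k1 k2) >> : galg K R)
  (at level 40, no associativity).

Definition gfmul g1 g2 : galg K R :=
  \sum_(k1 <- msupp g1) \sum_(k2 <- msupp g2) g1 *M_[k1, k2] g2.

Lemma gfmull g1 g2 :
  gfmul g1 g2 = \sum_(k1 <- msupp g1) \sum_(k2 <- msupp g2) g1 *M_[k1, k2] g2.
Proof. by []. Qed.

Lemma gfmulr g1 g2 :
  gfmul g1 g2 = \sum_(k2 <- msupp g2) \sum_(k1 <- msupp g1) g1 *M_[k1, k2] g2.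
Proof. by rewrite gfmull exchange_big. Qed.

Lemma gfmullw (d1 d2 : {fset K}) g1 g2 :
  msupp g1 `<=` d1 -> msupp g2 `<=` d2 ->
  gfmul g1 g2 = \sum_(k1 <- d1) \sum_(k2 <- d2) g1 *M_[k1, k2] g2.
Proof.
move=> le_d1 le_d2; rewrite gfmull (big_fset_incl _ le_d1) /=.
  apply/eq_bigr=> k1 _; apply/big_fset_incl => // k _ /mcoeff_outdom ->.
  by rewrite mulr0 monalgU0.
move=> k _ /mcoeff_outdom g1k.
by rewrite big1 => // k' _; rewrite g1k mul0r monalgU0.
Qed.

Lemma gfmulrw (d1 d2 : {fset K}) g1 g2 : msupp g1 `<=` d1 -> msupp g2 `<=` d2
  -> gfmul g1 g2 = \sum_(k2 <- d2) \sum_(k1 <- d1) g1 *M_[k1, k2] g2.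
Proof. by move=> le_d1 le_d2; rewrite (gfmullw le_d1 le_d2) exchange_big. Qed.

Definition gfmullwl (d1 : {fset K}) {g1 g2} (le : msupp g1 `<=` d1) :=
  @gfmullw _ _ g1 g2 le (fsubset_refl _).

Definition gfmulrwl (d2 : {fset K}) {g1 g2} (le : msupp g2 `<=` d2) :=
  @gfmulrw _ _ g1 g2 (fsubset_refl _) le.

Lemma gfmul0g : left_zero 0 gfmul.
Proof. by move=> g; rewrite gfmull msupp0 big_seq_fset0. Qed.

Lemma gfmulg0 : right_zero 0 gfmul.
Proof. by move=> g; rewrite gfmulr msupp0 big_seq_fset0. Qed.

Lemma gfmulUg c k g :
  gfmul << c *g k >> g = \sum_(k' <- msupp g) << c * (mcoeff k' g) *g gmul k k' >>.
Proof.
rewrite (gfmullw msuppU_le (fsubset_refl _)) big_seq_fset1.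
by apply/eq_bigr => k' _; rewrite mcoeffUU.
Qed.

Lemma gfmulgU c k g :
  gfmul g << c *g k >> = \sum_(k' <- msupp g) << (mcoeff k' g) * c *g gmul k' k >>.
Proof.
rewrite (gfmulrw (fsubset_refl _) msuppU_le) big_seq_fset1.
by apply/eq_bigr=> k' _; rewrite mcoeffUU.
Qed.

Lemma gfmulUU c1 c2 k1 k2 :
  gfmul << c1 *g k1 >> << c2 *g k2 >> = << c1 * c2 *g gmul k1 k2 >> :> galg K R.
Proof. by rewrite (gfmulrw msuppU_le msuppU_le) !big_seq_fset1 !mcoeffUU. Qed.

Lemma gfmulEl1 g1 g2 :
  gfmul g1 g2 = \sum_(k1 <- msupp g1) gfmul << (mcoeff k1 g1) *g k1 >> g2.
Proof. by apply/eq_bigr=> k _; rewrite gfmulUg. Qed.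

Lemma gfmulEr1 g1 g2 :
  gfmul g1 g2 = \sum_(k2 <- msupp g2) gfmul g1 << (mcoeff k2 g2) *g k2 >>.
Proof. by rewrite gfmulr; apply/eq_bigr=> k _; rewrite gfmulgU. Qed.

Lemma gfmul1g : left_id gfone gfmul.
Proof.
move=> g; rewrite gfmulUg [RHS]monalgE.
by apply/eq_bigr=> kg _; rewrite mul1r gmul1g.
Qed.

Lemma gfmulg1 : right_id gfone gfmul.
Proof.
move=> g; rewrite gfmulgU [RHS]monalgE.
by apply/eq_bigr=> k _; rewrite mulr1 gmulg1.
Qed.

Lemma gfmulgDl : left_distributive gfmul +%R.
Proof.
move=> g1 g2 g; rewrite [in RHS](gfmullwl (fsubsetUl _ (msupp g2))).
rewrite [in RHS](gfmullwl (fsubsetUr (msupp g1) _)) (gfmullwl (msuppD_le _ _)).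
rewrite -big_split /=; apply/eq_bigr=> k1 _.
rewrite -big_split /=; apply/eq_bigr=> k2 _.
by rewrite mcoeffD mulrDl monalgUD.
Qed.

Lemma gfmulgDr : right_distributive gfmul +%R.
Proof.
move=> g g1 g2; rewrite [in RHS](gfmulrwl (fsubsetUl _ (msupp g2))).
rewrite [in RHS](gfmulrwl (fsubsetUr (msupp g1) _)) (gfmulrwl (msuppD_le _ _)).
rewrite -big_split /=; apply/eq_bigr => k1 _.
rewrite -big_split /=; apply/eq_bigr => k2 _.
by rewrite mcoeffD mulrDr monalgUD.
Qed.

Lemma gfmulA : associative gfmul.
Proof.
move=> g1 g2 g3.
rewrite [RHS](big_morph (gfmul^~ _) (fun _ _ => gfmulgDl _ _ _) (gfmul0g _)).
rewrite gfmulEl1; apply/eq_bigr=> k1 _.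
rewrite [LHS](big_morph (gfmul _) (fun _ _ => gfmulgDr _ _ _) (gfmulg0 _)).
rewrite [RHS](big_morph (gfmul^~ _) (fun _ _ => gfmulgDl _ _ _) (gfmul0g _)).
apply/eq_bigr=> k2 _.
rewrite [LHS](big_morph (gfmul _) (fun _ _ => gfmulgDr _ _ _) (gfmulg0 _)).
by rewrite gfmulEr1; apply/eq_bigr=> k3 _; rewrite !gfmulUU mulrA gmulA.
Qed.

Lemma gfoner_eq0 : gfone != 0.
Proof. by apply/eqP/malgP=> /(_ gone) /eqP; rewrite mcoeffUU mcoeff0 oner_eq0. Qed.

HB.instance Definition _ := GRing.Zmodule_isRing.Build (galg K R)
  gfmulA gfmul1g gfmulg1 gfmulgDl gfmulgDr gfoner_eq0.
End GAlgRing.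

From mathcomp.multinomials Require Import mpoly.
From mathcomp Require Import fraction.

(* F = field of fractions of  Q[G], G free abelian on x12,...,x34,    *)
(* realised as Q(x12,x13,x14,x23,x24,x34) = Frac Q[x12,...,x34]      *)
(* (Q[G] is the localisation of Q[x_ij] at monomials, same fraction    *)
Definition F : fieldType := {fraction (mpoly.mpoly 6 rat)}.

Definition sym_index (i j : 'I_4) : 'I_6 :=
  inord (match nat_of_ord i, nat_of_ord j with
         | 0, 1 => 0 | 0, 2 => 1 | 0, 3 => 2
         | 1, 2 => 3 | 1, 3 => 4 | 2, 3 => 5
         | _, _ => 0 end)%N.

Definition xsym (i j : 'I_4) : F := tofrac ('X_(sym_index i j) : mpoly.mpoly 6 rat).

Definition L (A B : grpType) : ringType := galg (A * B)%type F.

Definition scal (A B : grpType) (c : F) : L A B := c *: (1 : L A B).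

Definition Xmat (A B : grpType) : 'M[L A B]_4 :=
  \matrix_(i < 4, j < 4)
    (if i == j then 1 else if (i < j)%N then scal A B (xsym i j) else 0).

Definition Amat (A B : grpType) (a : L A B) : 'M[L A B]_4 :=
  \matrix_(i < 4, j < 4) (if i == j then (if odd i then a else 1) else 0).

(* Main.v *)
Require Import Defs.
From HB Require Import structures.
From mathcomp Require Import all_boot all_order all_algebra.
From mathcomp Require Import finmap.
From mathcomp.multinomials Require Import xfinmap monalg mpoly.
From mathcomp Require Import fraction ring.
Set Implicit Arguments.
Unset Strict Implicit.
Unset Printing Implicit Defensive.
Import GRing.Theory.
Local Open Scope ring_scope.

Definition mX (k : nat) : mpoly 6 rat := mpolyX rat (mnm1 (inord k : 'I_6)).
Definition t (k : nat) : F := tofrac (mX k).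

Definition xf (i j : nat) : F :=
  match i, j with
  | 0, 0 | 1, 1 | 2, 2 | 3, 3 => 1
  | 0, 1 => t 0 | 0, 2 => t 1 | 0, 3 => t 2
  | 1, 2 => t 3 | 1, 3 => t 4 | 2, 3 => t 5
  | _, _ => 0 end.

Definition yf (i j : nat) : F :=
  match i, j with
  | 0, 0 | 1, 1 | 2, 2 | 3, 3 => 1
  | 0, 1 => - t 0 | 0, 2 => t 0 * t 3 - t 1
  | 0, 3 => - t 2 + t 0 * t 4 + t 1 * t 5 - t 0 * t 3 * t 5
  | 1, 2 => - t 3 | 1, 3 => t 3 * t 5 - t 4 | 2, 3 => - t 5
  | _, _ => 0 end.

Definition Xf : 'M[F]_4 := \matrix_(i < 4, j < 4) xf i j.
Definition Yf : 'M[F]_4 := \matrix_(i < 4, j < 4) yf i j.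

Lemma ord4P (P : 'I_4 -> Prop) :
  P (@Ordinal 4 0 isT) -> P (@Ordinal 4 1 isT) -> P (@Ordinal 4 2 isT) ->
  P (@Ordinal 4 3 isT) -> forall i, P i.
Proof.
move=> P0 P1 P2 P3 [[|[|[|[|m]]]] Hi];
  try by rewrite (bool_irrelevance Hi isT).
by [].
Qed.

Lemma XYf : Xf *m Yf = 1%:M.
Proof.
apply/matrixP; apply: ord4P; apply: ord4P;
  rewrite !mxE !big_ord_recr big_ord0 /= !mxE /=; ring.
Qed.
Section S.
Variables (A B : grpType).
Local Notation sc := (scal A B).

Lemma scU (c : F) : sc c = << c *g (gone : A * B) >>.
Proof.
apply/monalg.malgP=> k; rewrite /scal monalg.mcoeffZ /= !monalg.mcoeffU.
by case: eqP => _; rewrite ?mulr1 ?mulr0.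
Qed.

Lemma scZU (c x : F) (k : A * B) : c *: << x *g k >> = << c * x *g k >> :> L A B.
Proof.
by apply/monalg.malgP=> k'; rewrite monalg.mcoeffZ !monalg.mcoeffU; case: eqP => _; rewrite ?mulr0.
Qed.

Lemma scMl (c : F) (g : L A B) : sc c * g = c *: g.
Proof.
rewrite scU; change (gfmul << c *g gone >> g = c *: g).
rewrite gfmulUg [in RHS](monalgE g) scaler_sumr.
by apply/eq_bigr=> k _; rewrite scZU gmul1g.
Qed.

Lemma scMr (c : F) (g : L A B) : g * sc c = c *: g.
Proof.
rewrite scU; change (gfmul g << c *g gone >> = c *: g).
rewrite gfmulgU [in RHS](monalgE g) scaler_sumr.
by apply/eq_bigr=> k _; rewrite scZU gmulg1 mulrC.
Qed.

Lemma scM (c d : F) : sc (c * d) = sc c * sc d.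
Proof. by rewrite scMl /scal scalerA. Qed.
Lemma scD (c d : F) : sc (c + d) = sc c + sc d.
Proof. by rewrite /scal scalerDl. Qed.
Lemma sc0 : sc 0 = 0. Proof. by rewrite /scal scale0r. Qed.
Lemma sc1 : sc 1 = 1. Proof. by rewrite /scal scale1r. Qed.

Lemma map_scM (P Q : 'M[F]_4) : map_mx sc (P *m Q) = map_mx sc P *m map_mx sc Q.
Proof.
apply/matrixP=> i k; rewrite !mxE (big_morph sc scD sc0).
by apply/eq_bigr=> j _; rewrite !mxE scM.
Qed.

Lemma map_sc1 : map_mx sc (1%:M : 'M[F]_4) = 1%:M.
Proof. by apply/matrixP=> i k; rewrite !mxE; case: eqP=> _; rewrite ?sc1 ?sc0. Qed.

End S.

Lemma YXf : Yf *m Xf = 1%:M.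
Proof. exact: mulmx1C XYf. Qed.

Section Main.
Variables (A B : grpType).
Local Notation sc := (scal A B).

Lemma hX : Xmat A B = map_mx sc Xf.
Proof.
apply/matrixP; apply: ord4P; apply: ord4P; rewrite !mxE /=;
  rewrite ?sc0 ?sc1 //.
Qed.

Lemma entry (Y X : 'M[F]_4) (a : L A B) i k :
  (map_mx sc Y *m Amat a *m map_mx sc X) i k =
  sc ((Y *m X) i k) + (\sum_(j < 4) (if odd j then Y i j * X j k else 0)) *: (a - 1).
Proof.
rewrite !mxE /scal scaler_suml scaler_suml -big_split /=.
apply: eq_bigr => j _.
rewrite !mxE (bigD1 j) //= big1 => [|l /negbTE ne]; last first.
  by rewrite !mxE ne mulr0.
rewrite !mxE eqxx addr0.
have scl (c : F) (g : L A B) : (c *: (1 : L A B)) * g = c *: g by exact: scMl.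
have scr (c : F) (g : L A B) : g * (c *: (1 : L A B)) = c *: g by exact: scMr.
rewrite scl scr scalerA mulrC.
case: (odd j).
  by rewrite -scalerDr addrC subrK.
by rewrite scale0r addr0.
Qed.

End Main.

Lemma frac_neq0 (P : mpoly 6 rat) (v : 'I_6 -> rat) (c : F) :
  c = tofrac P -> meval v P != 0 -> c != 0.
Proof.
move=> -> nz; rewrite tofrac_eq0; apply: contra nz => /eqP ->.
by rewrite meval0.
Qed.

Theorem lemma4 (A B : grpType)
    (gtA : A -> A -> Prop) (gtB : B -> B -> Prop)
    (hA : ordered_group gtA) (hB : ordered_group gtB)
    (a : L A B) (ha0 : a != 0) (ha1 : a != 1)
    (Xinv : 'M[L A B]_4)
    (hXl : Xinv *m Xmat A B = 1%:M) (hXr : Xmat A B *m Xinv = 1%:M) :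
  forall i k : 'I_4, (i <= k)%N ->
    (Xinv *m Amat a *m Xmat A B) i k != 0.
Proof.
have hY : Xinv = map_mx (scal A B) Yf.
  by rewrite -[Xinv]mulmx1 -(map_sc1 A B) -XYf map_scM mulmxA -hX hXl mul1mx.
have a1 : a - 1 != 0 by rewrite subr_eq0.
rewrite hY hX.
apply: ord4P; apply: ord4P => //= _; rewrite entry YXf !mxE /=;
  rewrite !big_ord_recr big_ord0 /= !mxE /=.
- by rewrite !(mulr0, mul0r, addr0, add0r) scale0r addr0 sc1 oner_neq0.
- rewrite sc0 add0r scaler_eq0 negb_or a1 andbT.
  apply: (@frac_neq0 (- mX 0) (fun _ => 1)); first by rewrite /t; ring.
  by rewrite mevalN mevalXU oppr_eq0 oner_eq0.
- rewrite sc0 add0r scaler_eq0 negb_or a1 andbT.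
  apply: (@frac_neq0 (- (mX 0 * mX 3)) (fun _ => 1)); first by rewrite /t; ring.
  by rewrite mevalN mevalM !mevalXU mulr1 oppr_eq0 oner_eq0.
- rewrite sc0 add0r scaler_eq0 negb_or a1 andbT.
  apply: (@frac_neq0 (- mX 2 + mX 1 * mX 5 - mX 0 * mX 3 * mX 5)
     (fun i : 'I_6 => if nat_of_ord i == 2%N then 1 else 0)); first by rewrite /t; ring.
  rewrite mevalB mevalD mevalN !mevalM !mevalXU !inordK //.
- by rewrite !(mulr0, mul0r, mulr1, addr0, add0r) scale1r sc1 addrC subrK; exact: ha0.
- rewrite sc0 add0r scaler_eq0 negb_or a1 andbT.
  apply: (@frac_neq0 (mX 3) (fun _ => 1)); first by rewrite /t; ring.
  by rewrite mevalXU oner_eq0.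
- rewrite sc0 add0r scaler_eq0 negb_or a1 andbT.
  apply: (@frac_neq0 (mX 3 * mX 5) (fun _ => 1)); first by rewrite /t; ring.
  by rewrite mevalM !mevalXU mulr1 oner_eq0.
- by rewrite !(mulr0, mul0r, addr0, add0r) scale0r addr0 sc1 oner_neq0.
- rewrite sc0 add0r scaler_eq0 negb_or a1 andbT.
  apply: (@frac_neq0 (- mX 5) (fun _ => 1)); first by rewrite /t; ring.
  by rewrite mevalN mevalXU oppr_eq0 oner_eq0.
- by rewrite !(mulr0, mul0r, mulr1, addr0, add0r) scale1r sc1 addrC subrK; exact: ha0.
Qed.
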